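(* There are absolute constants $c_1,c_2>0$ such that for infinitely many $n$ there exist integers $b_1,\dots,b_n\ge 0$ with $b_1+\dots+b_n=n-1$ such that $(b_1,\dots,b_n)$-BG has an equilibrium graph in the SUM version whose diameter $d$ satisfies $c_1\log n\le d\le c_2\log n$.
   Context: Bounded budget network creation game $(b_1,\dots,b_n)$-BG: $n$ players with integer budgets $0\le b_i\le n-1$. A strategy of player $i$ is a set $S_i\subseteq\{1,\dots,n\}\setminus\{i\}$ with $|S_i|=b_i$; a profile is realized by the directed graph $G$ on $u_1,\dots,u_n$ with an arc $\overrightarrow{u_iu_j}$ iff $j\in S_i$. $U(G)$ is the undirected multigraph obtained by ignoring directions; $\operatorname{dist}(u,v)$ is the distance in $U(G)$, defined as $n^2$ between different components. SUM cost: $c_{SUM}(u)=\sum_v\operatorname{dist}(u,v)$. An equilibrium graph in the SUM version is a realization in which no vertex can decrease its SUM cost by changing its own strategy while the other strategies are fixed. The diameter is the maximum distance between two vertices. Logarithms are base 2. *)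

(* Defs.v *)
From mathcomp Require Import all_boot.
From Stdlib Require Import Reals.

Set Implicit Arguments.
Unset Strict Implicit.
Unset Printing Implicit Defensive.

(* Bounded budget network creation game, SUM version.
   Players/vertices are 'I_n (u_i <-> i).  A strategy profile is
   S : 'I_n -> {set 'I_n}; S i is the set of heads of the arcs bought by i. *)

Section BG.
Variable n : nat.

Definition valid_strategy (b : 'I_n -> nat) (i : 'I_n) (Si : {set 'I_n}) : bool :=
  (i \notin Si) && (#|Si| == b i).

Definition valid_profile (b : 'I_n -> nat) (S : 'I_n -> {set 'I_n}) : Prop :=
  forall i, valid_strategy b i (S i).

Definition adj (S : 'I_n -> {set 'I_n}) (u v : 'I_n) : bool :=
  (v \in S u) || (u \in S v).

Fixpoint ball (S : 'I_n -> {set 'I_n}) (k : nat) (u : 'I_n) : {set 'I_n} :=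
  match k with
  | 0 => [set u]
  | k'.+1 => ball S k' u :|: [set v | [exists w in ball S k' u, adj S w v]]
  end.

(* distance in U(G): the least k with v in ball k u (such a k, if any, is < n);
   n^2 between different components *)
Definition dist (S : 'I_n -> {set 'I_n}) (u v : 'I_n) : nat :=
  let k := find (fun k => v \in ball S k u) (iota 0 n) in
  if k < n then k else n ^ 2.

Definition sum_cost (S : 'I_n -> {set 'I_n}) (u : 'I_n) : nat :=
  \sum_(v : 'I_n) dist S u v.

Definition deviate (S : 'I_n -> {set 'I_n}) (i : 'I_n) (Si : {set 'I_n}) :
  'I_n -> {set 'I_n} := fun j => if j == i then Si else S j.

Definition sum_equilibrium (b : 'I_n -> nat) (S : 'I_n -> {set 'I_n}) : Prop :=
  valid_profile b S /\
  forall (i : 'I_n) (Si : {set 'I_n}), valid_strategy b i Si ->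
    sum_cost S i <= sum_cost (deviate S i Si) i.

Definition diameter (S : 'I_n -> {set 'I_n}) : nat :=
  \max_(u : 'I_n) \max_(v : 'I_n) dist S u v.

End BG.

Definition log2 (x : R) : R := (ln x / ln 2)%R.

(* Main.v *)
Require Import Defs.
From mathcomp Require Import all_boot zify.
Set Implicit Arguments. Unset Strict Implicit. Unset Printing Implicit Defensive.

Lemma powE a b : Nat.pow a b = a ^ b.
Proof. elim: b => [//|b IH]; by rewrite expnS -IH. Qed.

Section Generic.
Variable n : nat.
Implicit Types (S : 'I_n -> {set 'I_n}) (u v w : 'I_n).

Lemma ball_sub S k u : ball S k u \subset ball S k.+1 u.
Proof. by rewrite /= subsetUl. Qed.

Lemma ball_mono S k k' u : k <= k' -> ball S k u \subset ball S k' u.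
Proof.
elim: k' => [|k' IH]; first by rewrite leqn0 => /eqP->.
rewrite leq_eqVlt => /orP[/eqP->//|/IH H]; exact: subset_trans H (ball_sub _ _ _).
Qed.

Lemma ball_step S k u w v : w \in ball S k u -> adj S w v -> v \in ball S k.+1 u.
Proof.
move=> Hw Ha; rewrite /= inE; apply/orP; right; rewrite inE.
by apply/existsP; exists w; rewrite Hw.
Qed.

Lemma ball_lb S u (f : 'I_n -> nat) :
  f u = 0 -> (forall w v, adj S w v -> f v <= (f w).+1) ->
  forall k v, v \in ball S k u -> f v <= k.
Proof.
move=> fu Hf; elim=> [|k IH] v /=.
  by rewrite inE => /eqP->; rewrite fu.
rewrite inE => /orP[/IH/leqW//|]; rewrite inE => /existsP[w /andP[Hw Ha]].
by apply: leq_trans (Hf _ _ Ha) _; rewrite ltnS IH.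
Qed.

Lemma dist_lb S u (f : 'I_n -> nat) v :
  f u = 0 -> (forall w v, adj S w v -> f v <= (f w).+1) ->
  f v <= n ^ 2 -> f v <= dist S u v.
Proof.
move=> fu Hf fb; rewrite -powE in fb; rewrite /dist.
case: ifP => [Hlt|_]; last exact: fb.
have Hh : has (fun k => v \in ball S k u) (iota 0 n) by rewrite has_find size_iota.
have := nth_find 0 Hh; rewrite nth_iota ?size_iota // add0n.
exact: ball_lb.
Qed.

Lemma dist_ub S u v k : v \in ball S k u -> k < n -> dist S u v <= k.
Proof.
move=> Hv Hk; rewrite /dist.
have Hf : find (fun k => v \in ball S k u) (iota 0 n) <= k.
  rewrite leqNgt; apply/negP => Hlt.
  by have := before_find 0 Hlt; rewrite nth_iota // add0n Hv.
by rewrite (leq_ltn_trans Hf Hk).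
Qed.

Lemma dist_inf S u v : (forall k, v \notin ball S k u) -> dist S u v = n ^ 2.
Proof.
move=> H; rewrite /dist hasNfind ?size_iota ?ltnn ?powE //.
by apply/hasPn => k _; apply: H.
Qed.

End Generic.


Section Tree.
Variable k : nat.
Local Notation T := {set 'I_k}.
Implicit Types (A B C P Q U V W x : T) (i j p m t : 'I_k).

Definition childj A j := [forall i in A, (i < j)%N].
Definition child A B := [exists j, childj A j && (B == j |: A)].
Definition dif A B i := [exists j : 'I_k, (j <= i) && ((j \in A) != (j \in B))].
Definition term A B i := ((i \in A) + (i \in B)) * dif A B i.
Definition d A B := \sum_(i < k) term A B i.
Definition inD A j B := [forall i : 'I_k, (i <= j) ==> ((i \in B) == ((i \in A) || (i == j)))].

Lemma difC A B i : dif A B i = dif B A i.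
Proof. by apply: eq_existsb => p; rewrite eq_sym. Qed.

Lemma dC A B : d A B = d B A.
Proof. by apply: eq_bigr => i _; rewrite /term difC addnC. Qed.

Lemma difP A B i : reflect (exists2 p : 'I_k, p <= i & (p \in A) != (p \in B)) (dif A B i).
Proof.
apply: (iffP existsP) => [[p /andP[H1 H2]]|[p H1 H2]]; exists p => //.
by rewrite H1.
Qed.

Lemma ndif_eq A B i : ~~ dif A B i -> (i \in A) = (i \in B).
Proof. by move=> H; apply/eqP; apply: contraNT H => H; apply/difP; exists i. Qed.

Lemma dif_mono A B i i' : i <= i' -> dif A B i -> dif A B i'.
Proof. by move=> Hi /difP[p Hp Hd]; apply/difP; exists p => //; apply: leq_trans Hi. Qed.

Lemma dif_agree U V W i : (forall p, p <= i -> (p \in W) = (p \in V)) -> dif U W i = dif U V i.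
Proof. by move=> H; apply: eq_existsb => p; case: leqP => //= Hp; rewrite H. Qed.

Lemma term_le2 A B i : term A B i <= 2.
Proof. by rewrite /term; case: (i \in A); case: (i \in B); case: (dif A B i). Qed.

Lemma d_le A B : d A B <= k.*2.
Proof.
apply: (@leq_trans (\sum_(i < k) 2)); first by apply: leq_sum => i _; rewrite term_le2.
by rewrite sum_nat_const card_ord muln2.
Qed.

Lemma d_refl A : d A A = 0.
Proof.
apply: big1 => i _; rewrite /term; case: difP => [[p _]|]; last by rewrite muln0.
by rewrite eqxx.
Qed.

Lemma term_tri A B C i : term A C i <= term A B i + term B C i.
Proof.
rewrite /term.
case: (boolP (dif A C i)) => HAC; last by rewrite muln0.
case: (boolP (dif A B i)) => HAB; case: (boolP (dif B C i)) => HBC.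
- by rewrite !muln1; case: (i \in A); case: (i \in B); case: (i \in C).
- by rewrite !muln1 muln0 addn0 (ndif_eq HBC).
- by rewrite !muln1 muln0 add0n (ndif_eq HAB).
- exfalso; move/difP: HAC => [p Hp Hd].
  move/negP: HAB; apply; apply/difP; exists p => //.
  apply: contraNN Hd => /eqP->; apply/eqP.
  by apply: ndif_eq; apply: contraNN HBC; apply: dif_mono.
Qed.

Lemma d_tri A B C : d A C <= d A B + d B C.
Proof. by rewrite /d -big_split; apply: leq_sum => i _; apply: term_tri. Qed.

Lemma childjN A j : childj A j -> j \notin A.
Proof. by move/forallP => /(_ j); rewrite ltnn; case: (j \in A). Qed.

Lemma childjP A j i : childj A j -> i \in A -> i < j.
Proof. by move/forallP => /(_ i) /implyP; apply. Qed.

Lemma d_child A j : childj A j -> d A (j |: A) = 1.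
Proof.
move=> Hj.
have Ht : forall i, term A (j |: A) i = (i == j).
  move=> i; rewrite /term.
  have -> : dif A (j |: A) i = (j <= i).
    apply/difP/idP => [[p Hp]|Hji].
      rewrite in_setU1; case: (eqVneq p j) => [<-//|Hpj]; by rewrite /= eqxx.
    by exists j => //; rewrite in_setU1 eqxx (negbTE (childjN Hj)).
  rewrite in_setU1.
  case: (ltnP i j) => Hij.
    by rewrite muln0; case: eqP => // Hij'; rewrite Hij' ltnn in Hij.
  have HiA : i \notin A by apply/negP => /(childjP Hj); rewrite ltnNge Hij.
  rewrite (negbTE HiA) muln1 orbF add0n //.
rewrite /d (eq_bigr _ (fun i _ => Ht i)) (bigD1 j) //= eqxx big1 // => i /negbTE ->.
by [].
Qed.


Lemma setmax V (x : 'I_k) : x \in V -> exists2 m, m \in V & forall i, i \in V -> i <= m.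
Proof.
move=> Hx; case: (@arg_maxnP _ x (mem V) (fun i : 'I_k => (i : nat)) Hx) => m Hm Hmax.
by exists m.
Qed.

Lemma setmin (P : pred 'I_k) (x : 'I_k) : P x -> exists2 m, P m & forall i, P i -> m <= i.
Proof.
move=> Hx; case: (@arg_minnP _ x P (fun i : 'I_k => (i : nat)) Hx) => m Hm Hmin.
by exists m.
Qed.

Lemma childE A B : child A B -> exists2 j, childj A j & B = j |: A.
Proof. by move/existsP=> [j /andP[H /eqP->]]; exists j. Qed.

Lemma childI A j : childj A j -> child A (j |: A).
Proof. by move=> H; apply/existsP; exists j; rewrite H eqxx. Qed.

Lemma d_edge A B : child A B -> d A B = 1.
Proof. by case/childE => j Hj ->; apply: d_child. Qed.

Lemma neighbor U V : U != V ->
  exists W, (child W V || child V W) && (d U W < d U V).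
Proof.
move=> HUV.
case: (boolP [exists i, (i \in V) && dif U V i]) => [/existsP[i0 /andP[Hi0 Hd0]]|Hno].
- have [m Hm Hmax] := setmax Hi0.
  have Hdm : dif U V m by apply: dif_mono (Hmax _ Hi0) Hd0.
  exists (V :\ m); apply/andP; split.
    apply/orP; left; apply/existsP; exists m; apply/andP; split.
      apply/forallP => i; apply/implyP; rewrite in_setD1 => /andP[Him HiV].
      by rewrite ltn_neqAle Hmax // andbT; apply: contra Him => /eqP/val_inj->.
    by rewrite setD1K.
  have Hpt : forall i, term U (V :\ m) i <= term U V i.
    move=> i; rewrite /term.
    case: (ltnP i m) => Him.
      rewrite (@dif_agree U V (V :\ m) i); last first.
        move=> p Hp; rewrite in_setD1; case: eqP => // Hpm.
        by rewrite Hpm in Hp; rewrite ltnNge Hp in Him.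
      by rewrite in_setD1; case: eqP => //= Hem; rewrite Hem ltnn in Him.
    rewrite (dif_mono Him Hdm) !muln1; case: (dif _ _ _); rewrite ?muln0 ?muln1 //.
    rewrite leq_add2l in_setD1.
    by case: (_ != _); case: (i \in V).
  rewrite /d (bigD1 m) //= [X in _ < X](bigD1 m) //=.
  rewrite -addSn; apply: leq_add; last by apply: leq_sum => i _; apply: Hpt.
  rewrite /term Hdm !muln1 Hm in_setD1 eqxx /=.
  by case: (dif _ _ _); case: (m \in U).
- have [t0 Ht0] : exists t, (t \in U) != (t \in V).
    apply/existsP; apply: contraNT HUV => /existsPn H.
    by apply/eqP/setP => t; apply/eqP; move: (H t); case: eqP.
  have [t Ht Htmin] := @setmin (fun t => (t \in U) != (t \in V)) t0 Ht0.
  have HtV : t \notin V.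
    apply/negP => HtV; move/existsPn: Hno => /(_ t); rewrite HtV /=.
    by apply/negP/negPn; apply/difP; exists t.
  have HtU : t \in U by move: Ht; rewrite (negbTE HtV); case: (t \in U).
  have Hagree : forall p, p < t -> (p \in U) = (p \in V).
    move=> p Hp; apply/eqP; apply: contraTT Hp => Hd; rewrite -leqNgt; exact: Htmin.
  have Hchj : childj V t.
    apply/forallP => i; apply/implyP => HiV; rewrite ltnNge; apply/negP => Hti.
    move/existsPn: Hno => /(_ i); rewrite HiV /=; apply/negP/negPn.
    by apply/difP; exists t.
  exists (t |: V); apply/andP; split; first by rewrite childI // orbT.
  have HdifW : forall i, i <= t -> dif U (t |: V) i = false.
    move=> i Hi; apply/negbTE/negP; case/difP => p Hp; rewrite in_setU1.
    case: (eqVneq p t) => [->|Hpt]; first by rewrite HtU.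
    rewrite /= Hagree ?eqxx //.
    by rewrite ltn_neqAle (leq_trans Hp Hi) andbT; apply: contra Hpt => /eqP/val_inj->.
  have Hpt : forall i, term U (t |: V) i <= term U V i.
    move=> i; rewrite /term.
    case: (leqP i t) => Hit; first by rewrite HdifW // muln0.
    have Hd : dif U V i by apply/difP; exists t; [exact: ltnW|exact: Ht].
    rewrite Hd !muln1; case: (dif _ _ _); rewrite ?muln0 ?muln1 // leq_add2l in_setU1.
    by case: eqP => [Hi|//]; rewrite Hi ltnn in Hit.
  rewrite /d (bigD1 t) //= [X in _ < X](bigD1 t) //=.
  rewrite -addSn; apply: leq_add; last by apply: leq_sum => i _; apply: Hpt.
  rewrite /term HdifW // muln0.
  have -> : dif U V t by apply/difP; exists t.
  by rewrite HtU (negbTE HtV).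
Qed.

Lemma inDP A j B : reflect (forall i, i <= j -> (i \in B) = ((i \in A) || (i == j))) (inD A j B).
Proof.
apply: (iffP forallP) => H i.
  by move=> Hi; move: (H i); rewrite Hi /= => /eqP.
by apply/implyP => Hi; rewrite H.
Qed.

Lemma inD_self A j : childj A j -> inD A j (j |: A).
Proof. by move=> _; apply/inDP => i _; rewrite in_setU1 orbC. Qed.

Lemma inD_A A j : childj A j -> ~~ inD A j A.
Proof.
move=> Hj; apply/negP => /inDP /(_ j (leqnn _)).
by rewrite eqxx orbT (negbTE (childjN Hj)).
Qed.

Lemma inD_disj A j j' B : childj A j -> childj A j' -> inD A j B -> inD A j' B -> j = j'.
Proof.
wlog Hlt : j j' / j <= j'.
  move=> W H1 H2 H3 H4; case: (leqP j j') => Hl; first exact: W.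
  by apply/esym/W => //; apply: ltnW.
move=> Hj Hj' /inDP H1 /inDP H2.
move: (H1 j (leqnn _)) (H2 j Hlt); rewrite eqxx orbT => ->.
rewrite (negbTE (childjN Hj)) /=; by case: eqP.
Qed.

Lemma boundary A j P Q : childj A j -> child P Q -> P != A -> inD A j P = inD A j Q.
Proof.
move=> Hj /childE [m Hm ->] HPA.
case: (ltnP j m) => Hjm.
  apply: eq_forallb => i; case: (leqP i j) => //= Hij.
  rewrite in_setU1; case: (eqVneq i m) => [Him|] //=.
  by move: Hij; rewrite Him leqNgt Hjm.
have HP : ~~ inD A j P.
  apply/negP => /inDP /(_ j (leqnn _)); rewrite eqxx orbT => /(childjP Hm).
  by rewrite ltnNge Hjm.
rewrite (negbTE HP); apply/esym/negP => /inDP H; move/negP: HPA; apply.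
apply/eqP/setP => i; apply/idP/idP => Hi.
  have Him := childjP Hm Hi.
  move: (H i (leq_trans (ltnW Him) Hjm)); rewrite in_setU1 Hi orbT => /esym.
  case: (eqVneq i j) => [Eij|]; last by rewrite orbF.
  by rewrite Eij ltnNge Hjm in Him.
have Hij := childjP Hj Hi.
move: (H i (ltnW Hij)); rewrite Hi /= in_setU1.
case: (eqVneq i m) => [Eim|] //= _.
move: (H j (leqnn _)); rewrite eqxx orbT in_setU1.
case: (eqVneq j m) => [Ejm|_] /=.
  by rewrite Eim -Ejm ltnn in Hij.
by move/(childjP Hm); rewrite ltnNge Hjm.
Qed.

Lemma child_uniq P P' B : child P B -> child P' B -> P = P'.
Proof.
move=> /childE[j Hj EB] /childE[j' Hj' EB'].
have Hmax : forall P j, childj P j -> B = j |: P -> forall i, i \in B -> i <= j.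
  move=> P0 j0 H0 E0 i; rewrite E0 in_setU1; case: eqP => [->//|_] /= /(childjP H0).
  exact: ltnW.
have Ejj : j = j'.
  apply/val_inj/eqP; rewrite eqn_leq.
  rewrite (Hmax _ _ Hj' EB' j) ?(Hmax _ _ Hj EB j') //;
    first [by rewrite EB setU11 | by rewrite EB' setU11].
subst j'.
apply/setP => i.
case: (eqVneq i j) => [->|Hij]; first by rewrite (negbTE (childjN Hj)) (negbTE (childjN Hj')).
have : (i \in B) = (i \in B) by [].
by rewrite {1}EB EB' !in_setU1 (negbTE Hij).
Qed.

Lemma child_exists B : B != set0 -> exists P, child P B.
Proof.
case/set0Pn => x Hx; have [m Hm Hmax] := setmax Hx.
exists (B :\ m); apply/existsP; exists m; apply/andP; split; last by rewrite setD1K.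
apply/forallP => i; apply/implyP; rewrite in_setD1 => /andP[Him HiB].
by rewrite ltn_neqAle Hmax // andbT; apply: contra Him => /eqP/val_inj->.
Qed.

Lemma child_set0 P : ~~ child P set0.
Proof.
apply/negP => /childE[j _ E]; have : j \in (set0 : T) by rewrite E setU11.
by rewrite inE.
Qed.

Lemma child_irr P : ~~ child P P.
Proof.
apply/negP => /childE[j Hj E]; have : j \in P by rewrite E setU11.
by rewrite (negbTE (childjN Hj)).
Qed.

Lemma childj_inj A j j' : childj A j -> childj A j' -> j |: A = j' |: A -> j = j'.
Proof.
move=> Hj Hj' E; have : j \in j' |: A by rewrite -E setU11.
by rewrite in_setU1 (negbTE (childjN Hj)) orbF => /eqP.
Qed.

Definition fl i B := if i \in B then B :\ i else i |: B.

Lemma fl_in i p B : (p \in fl i B) = if p == i then ~~ (i \in B) else p \in B.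
Proof.
rewrite /fl; case: (eqVneq p i) => [->|Hpi]; case: (boolP (i \in B)) => HiB.
- by rewrite in_setD1 eqxx.
- by rewrite setU11.
- by rewrite in_setD1 Hpi.
- by rewrite in_setU1 (negbTE Hpi).
Qed.

Lemma flK i : involutive (fl i).
Proof.
move=> B; apply/setP => p; rewrite !fl_in.
by case: (eqVneq p i) => [->|//]; rewrite eqxx negbK.
Qed.

Lemma median A j x : childj A j -> inD A j x ->
  \sum_(B | inD A j B) d (j |: A) B <= \sum_(B | inD A j B) d x B.
Proof.
move=> Hj Hx.
rewrite /d exchange_big [X in _ <= X]exchange_big /=.
apply: leq_sum => i _.
case: (leqP i j) => Hij.
  rewrite big1 // => B /inDP HB; rewrite /term.
  have -> : dif (j |: A) B i = false.
    apply/negbTE/negP; case/difP => p Hp; rewrite in_setU1 HB ?(leq_trans Hp Hij) //.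
    by rewrite orbC eqxx.
  by rewrite muln0.
set L := fun B => term (j |: A) B i.
set R := fun B => term x B i.
have HiA : i \notin j |: A.
  rewrite in_setU1; apply/norP; split.
    by apply/negP => /eqP Eij; rewrite Eij ltnn in Hij.
  by apply/negP => /(childjP Hj) Hi; move: (ltn_trans Hi Hij); rewrite ltnn.
have Hpt : forall B, L B + L (fl i B) <= R B + R (fl i B).
  move=> B; apply: (@leq_trans 1).
    rewrite /L /term (negbTE HiA) !add0n fl_in eqxx.
    by case: (i \in B); case: (dif _ B i); case: (dif _ (fl i B) i).
  have H1 : forall C, (i \in C) != (i \in x) -> 0 < R C.
    move=> C HC; rewrite /R /term.
    have -> : dif x C i by apply/difP; exists i; rewrite // eq_sym.
    by move: HC; case: (i \in C); case: (i \in x).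
  case: (boolP ((i \in B) != (i \in x))) => HB.
    by apply: leq_trans (H1 _ HB) (leq_addr _ _).
  have : (i \in fl i B) != (i \in x).
    by rewrite fl_in eqxx; move: HB; case: (i \in B); case: (i \in x).
  by move/H1 => H; apply: leq_trans H (leq_addl _ _).
have Hfl : forall (F : T -> nat), \sum_(B | inD A j B) F B = \sum_(B | inD A j B) F (fl i B).
  move=> F; rewrite (reindex_inj (can_inj (flK i))) /=.
  apply: eq_bigl => B; apply/inDP/inDP => H p Hp; move: (H p Hp); rewrite fl_in.
    by case: (eqVneq p i) => [Epi|//]; move: Hp; rewrite Epi leqNgt Hij.
  by case: (eqVneq p i) => [Epi|//]; move: Hp; rewrite Epi leqNgt Hij.
rewrite -(leq_pmul2l (isT : 0 < 2)) !mul2n -!addnn.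
rewrite [X in X + _ <= _]Hfl [X in _ <= X + _]Hfl -!big_split /=.
apply: leq_sum => B _; rewrite addnC [X in _ <= X]addnC; exact: Hpt.
Qed.

End Tree.


Section Game.
Variable k : nat.
Local Notation T := {set 'I_k}.
Local Notation n := #|{set 'I_k}|.
Local Notation V := ('I_#|{set 'I_k}|).

Definition ev (v : V) : T := enum_val v.
Definition Sg (v : V) : {set V} := [set w | child (ev v) (ev w)].
Definition bg (v : V) : nat := #|Sg v|.

Lemma ev_inj : injective ev. Proof. exact: enum_val_inj. Qed.
Lemma evK B : ev (enum_rank B) = B. Proof. exact: enum_rankK. Qed.

Lemma in_Sg v w : (w \in Sg v) = child (ev v) (ev w).
Proof. by rewrite inE. Qed.

Lemma card_T : n = 2 ^ k.
Proof. by rewrite -cardsT -powersetT card_powerset cardsT card_ord. Qed.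

Lemma d_lip (Z P Q : T) : child P Q -> d Z Q <= (d Z P).+1 /\ d Z P <= (d Z Q).+1.
Proof.
move=> H; split.
  by apply: leq_trans (d_tri Z P Q) _; rewrite (d_edge H) addn1.
by apply: leq_trans (d_tri Z Q P) _; rewrite (dC Q P) (d_edge H) addn1.
Qed.

Lemma adj_Sg w v : adj Sg w v = child (ev w) (ev v) || child (ev v) (ev w).
Proof. by rewrite /adj !in_Sg. Qed.

Lemma lip_tree (Z : T) w v : adj Sg w v -> d Z (ev v) <= (d Z (ev w)).+1.
Proof. by rewrite adj_Sg => /orP[/(d_lip Z)[]|/(d_lip Z)[]]. Qed.

Lemma ball_d u v : v \in ball Sg (d (ev u) (ev v)) u.
Proof.
move: {2}(d (ev u) (ev v)) (leqnn (d (ev u) (ev v))) => m.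
elim: m v => [|m IH] v Hv.
  have Hd : d (ev u) (ev v) = 0 by apply/eqP; rewrite -leqn0.
  case: (eqVneq (ev u) (ev v)) => [/ev_inj->|Hne]; first by rewrite d_refl /= set11.
  have [W /andP[_ HW]] := neighbor Hne; by rewrite Hd in HW.
case: (eqVneq (ev u) (ev v)) => [/ev_inj->|Hne].
  by rewrite d_refl /= set11.
have [W /andP[HW Hlt]] := neighbor Hne.
set w := enum_rank W.
have Hw : w \in ball Sg (d (ev u) (ev w)) u by apply: IH; rewrite /w evK -ltnS (leq_trans Hlt Hv).
have Ha : adj Sg w v by rewrite adj_Sg /w evK.
have Hb := ball_step Hw Ha.
have : d (ev u) (ev v) <= (d (ev u) (ev w)).+1 by apply: lip_tree Ha.
rewrite /w evK => Hle.
have -> : d (ev u) (ev v) = (d (ev u) W).+1 by apply/eqP; rewrite eqn_leq Hle Hlt.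
by rewrite -(evK W).
Qed.

Hypothesis Hk : 3 <= k.

Lemma k2_lt_aux m : (m.+3).*2 < 2 ^ m.+3.
Proof.
elim: m => [//|m IH]; rewrite expnS; move: IH; rewrite -!mul2n.
move: (2 ^ m.+3) => X; lia.
Qed.

Lemma k2_lt : k.*2 < n.
Proof. by rewrite card_T; case: k Hk => [|[|[|k']]] // _; apply: k2_lt_aux. Qed.

Lemma dist_tree u v : dist Sg u v = d (ev u) (ev v).
Proof.
apply/eqP; rewrite eqn_leq; apply/andP; split.
  apply: dist_ub (ball_d u v) _; exact: leq_ltn_trans (d_le _ _) k2_lt.
apply: (@dist_lb _ Sg u (fun v => d (ev u) (ev v))) => //.
- exact: d_refl.
- by move=> w v' Ha; apply: lip_tree.
- apply: leq_trans (d_le _ _) _; apply: leq_trans (ltnW k2_lt) _.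
  by rewrite !expnS expn0 muln1 leq_pmull // (leq_ltn_trans _ k2_lt).
Qed.

Lemma cost_tree u : sum_cost Sg u = \sum_(v : V) d (ev u) (ev v).
Proof. by apply: eq_bigr => v _; rewrite dist_tree. Qed.

Lemma cost_lt u : sum_cost Sg u < n ^ 2.
Proof.
rewrite cost_tree; apply: (@leq_ltn_trans (\sum_(v : V) k.*2)).
  by apply: leq_sum => v _; apply: d_le.
rewrite sum_nat_const card_ord !expnS expn0 muln1 ltn_pmul2l //.
  exact: k2_lt.
exact: leq_ltn_trans (leq0n _) k2_lt.
Qed.

Lemma sum_transfer (P : pred T) (F : T -> nat) :
  \sum_(v : V | P (ev v)) F (ev v) = \sum_(B | P B) F B.
Proof. by rewrite (big_enum_val_cond (op := addn) (A := T)). Qed.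

Lemma deviation u Si : valid_strategy bg u Si ->
  sum_cost Sg u <= sum_cost (deviate Sg u Si) u.
Proof.
move=> /andP[HuSi /eqP HcSi].
set A := ev u; set S' := deviate Sg u Si.
set J := [set j | childj A j].
set D := fun j => [set v : V | inD A j (ev v)].
have HS'E : forall p, S' p = if p == u then Si else Sg p by [].
have HcardJ : #|Sg u| = #|J|.
  have -> : Sg u = [set enum_rank (j |: A) | j in J].
    apply/setP => w; rewrite in_Sg; apply/idP/imsetP.
      move/childE => [j Hj Ew]; exists j; first by rewrite inE.
      by apply: ev_inj; rewrite evK -Ew.
    by move=> [j]; rewrite inE => Hj ->; rewrite evK childI.
  apply: card_in_imset => j j' Hj Hj' E.
  move: (congr1 ev E); rewrite !evK; apply: childj_inj.
    by rewrite inE in Hj.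
  by rewrite inE in Hj'.
have evA : forall w, (ev w == A) = (w == u).
  by move=> w; apply/eqP/eqP => [/ev_inj|->].
case: (boolP [forall j in J, [exists x in Si, x \in D j]]) => Hall; last first.
  case/forall_inPn: Hall => j HjJ /exists_inPn Hno.
  have Hj : childj A j by rewrite inE in HjJ.
  have Hball : forall m v, v \in ball S' m u -> ~~ inD A j (ev v).
    elim=> [|m IH] v /=.
      by rewrite inE => /eqP->; apply: inD_A.
    rewrite inE => /orP[/IH//|]; rewrite inE => /existsP[w /andP[Hw Ha]].
    have Hw' := IH _ Hw.
    move: Ha; rewrite /adj !HS'E; case: (eqVneq w u) => [Ewu|Hwu] /=.
      case/orP => [Hv|]; first by move: (Hno _ Hv); rewrite inE.
      case: (eqVneq v u) => [->|Hvu]; first by move=> _; apply: inD_A.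
      rewrite in_Sg => Hc; rewrite (boundary Hj Hc) ?evA //; by rewrite Ewu in Hw' *.
    case/orP.
      rewrite in_Sg => Hc; rewrite -(boundary Hj Hc) ?evA //.
    case: (eqVneq v u) => [->|Hvu]; first by move=> _; apply: inD_A.
    rewrite in_Sg => Hc; rewrite (boundary Hj Hc) ?evA //.
  set c := enum_rank (j |: A).
  have Hdc : dist S' u c = n ^ 2.
    apply: dist_inf => m; apply/negP => /Hball.
    by rewrite /c evK inD_self.
  apply: leq_trans (ltnW (cost_lt u)) _.
  by rewrite /sum_cost (bigD1 c) //= Hdc leq_addr.
have HJ : forall j, (j \in J) = childj A j by move=> j; rewrite inE.
have HD : forall j v, (v \in D j) = inD A j (ev v) by move=> j v; rewrite inE.
set X := fun j => odflt u [pick x in Si | x \in D j].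
have HX : forall j, j \in J -> X j \in Si /\ X j \in D j.
  move=> j Hj; rewrite /X; case: pickP => [x /andP[H1 H2]|Hn] //=.
  by move/forall_inP: Hall => /(_ j Hj) /exists_inP[x H1 H2]; move: (Hn x); rewrite H1 H2.
have Hdisj : forall j j' v, j \in J -> j' \in J -> v \in D j -> v \in D j' -> j = j'.
  move=> j j' v; rewrite !HJ !HD; exact: inD_disj.
have HSiE : Si = X @: J.
  apply/esym/eqP; rewrite eqEcard; apply/andP; split.
    by apply/subsetP => x /imsetP[j Hj ->]; case: (HX j Hj).
  rewrite HcSi /bg HcardJ card_in_imset // => j j' Hj Hj' E.
  by apply: (Hdisj j j' (X j)) => //; [case: (HX j Hj)|rewrite E; case: (HX j' Hj')].
pose f := fun v => if [pick j in J | v \in D j] is Some j then (d (ev (X j)) (ev v)).+1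
                   else d A (ev v).
have fD : forall j v, j \in J -> v \in D j -> f v = (d (ev (X j)) (ev v)).+1.
  move=> j v Hj Hv; rewrite /f; case: pickP => [j' /andP[Hj' Hv']|Hn].
    by rewrite (Hdisj j' j v).
  by move: (Hn j); rewrite Hj Hv.
have fN : forall v, (forall j, j \in J -> v \notin D j) -> f v = d A (ev v).
  move=> v Hv; rewrite /f; case: pickP => [j' /andP[Hj' Hv']|//].
  by move: (Hv j' Hj'); rewrite Hv'.
have HuD : forall j, j \in J -> u \notin D j.
  by move=> j; rewrite HJ HD => Hj; apply: inD_A.
have fu : f u = 0 by rewrite fN // d_refl.
have Hedge : forall p q, q \in S' p -> f q <= (f p).+1 /\ f p <= (f q).+1.
  move=> p q; rewrite HS'E; case: (eqVneq p u) => [->|Hpu].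
    rewrite HSiE => /imsetP[j Hj ->]; case: (HX j Hj) => _ HXD.
    by rewrite fu (fD j _ Hj HXD) d_refl.
  rewrite in_Sg => Hc.
  have Hb : forall j, j \in J -> (p \in D j) = (q \in D j).
    by move=> j; rewrite HJ !HD => Hj; apply: boundary => //; rewrite evA.
  case: (boolP [exists j in J, p \in D j]) => [/exists_inP[j Hj Hp]|/exists_inPn Hn].
    have Hq : q \in D j by rewrite -Hb.
    by rewrite (fD j p Hj Hp) (fD j q Hj Hq) !ltnS; apply: d_lip.
  rewrite (fN p Hn) (fN q) => [|j Hj]; first exact: d_lip.
  by rewrite -Hb //; apply: Hn.
have Hlip : forall w v, adj S' w v -> f v <= (f w).+1.
  by move=> w v /orP[/Hedge[]|/Hedge[]].
have Hfb : forall v, f v <= n ^ 2.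
  move=> v; apply: (@leq_trans k.*2.+1).
    rewrite /f; case: pickP => [j _|_]; first by rewrite ltnS d_le.
    exact: leqW (d_le _ _).
  apply: leq_trans k2_lt _.
  by rewrite !expnS expn0 muln1 leq_pmull // (leq_ltn_trans _ k2_lt).
have Hcost' : \sum_(v : V) f v <= sum_cost S' u.
  by apply: leq_sum => v _; apply: dist_lb.
apply: leq_trans Hcost'; rewrite cost_tree.
set E := fun v => [exists j in J, v \in D j].
have Hdec : forall h : V -> nat,
    \sum_(v : V) h v = \sum_(v | ~~ E v) h v + \sum_(j in J) \sum_(v in D j) h v.
  move=> h; rewrite addnC (bigID E) /=; congr (_ + _).
  rewrite (eq_bigr (fun j => \sum_(v : V) (v \in D j) * h v)); last first.
    by move=> j _; rewrite big_mkcond /=; apply: eq_bigr => v _; case: (v \in D j); rewrite ?mul1n.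
  rewrite exchange_big /= big_mkcond /=; apply: eq_bigr => v _.
  case: (boolP (E v)) => [/exists_inP[j Hj Hv]|/exists_inPn Hn].
    rewrite (bigD1 j) //= Hv mul1n big1 ?addn0 // => j' /andP[Hj' Hjj'].
    case: (boolP (v \in D j')) => Hv'; last by rewrite /= mul0n.
    by move: Hjj'; rewrite (Hdisj j' j v) ?eqxx.
  by rewrite big1 // => j Hj; rewrite (negbTE (Hn j Hj)).
rewrite (Hdec (fun v => d A (ev v))) (Hdec f).
apply: leq_add.
  rewrite leq_eqVlt; apply/orP; left; apply/eqP; apply: eq_bigr => v /exists_inPn Hn.
  by rewrite fN.
apply: leq_sum => j Hj.
have Hj' : childj A j by rewrite -HJ.
have [_ HXD] := HX j Hj.
rewrite [X in _ <= X](eq_bigr (fun v => (d (ev (X j)) (ev v)).+1)); last by move=> v Hv; rewrite (fD j v Hj Hv).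
set c := j |: A.
apply: (@leq_trans (\sum_(v in D j) (d c (ev v)).+1)).
  apply: leq_sum => v _; apply: leq_trans (d_tri A c (ev v)) _.
  by rewrite /c d_child // add1n.
rewrite -!(eq_bigr _ (fun v _ => addn1 _)) !big_split /= leq_add2r.
rewrite (eq_bigl (fun v => inD A j (ev v))); last by move=> v; rewrite HD.
rewrite [X in _ <= X](eq_bigl (fun v => inD A j (ev v))); last by move=> v; rewrite HD.
rewrite (sum_transfer (fun B => inD A j B) (fun B => d c B)).
rewrite (sum_transfer (fun B => inD A j B) (fun B => d (ev (X j)) B)).
apply: median => //; by rewrite -HD.
Qed.

Lemma equil : sum_equilibrium bg Sg.
Proof.
split; last by move=> i Si; apply: deviation.
move=> i; apply/andP; split; last by [].
by rewrite in_Sg child_irr.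
Qed.

Lemma bg_le i : bg i <= n.-1.
Proof.
apply: (@leq_trans #|[set~ i]|); last by rewrite cardsC1 card_ord.
rewrite /bg; apply: subset_leq_card; apply/subsetP => w.
rewrite in_Sg !inE; apply: contraTneq => ->; exact: child_irr.
Qed.

Lemma sum_bg : \sum_(i < n) bg i = n.-1.
Proof.
have -> : \sum_(i < n) bg i = \sum_(q : V) \sum_(p : V) (child (ev p) (ev q) : nat).
  rewrite exchange_big /=; apply: eq_bigr => p _.
  by rewrite /bg -sum1_card big_mkcond /=; apply: eq_bigr => q _; rewrite in_Sg; case: child.
apply: (@eq_trans _ _ #|[set~ enum_rank (set0 : T)]|); last by rewrite cardsC1 card_ord.
rewrite -sum1_card [RHS]big_mkcond /=.
apply: eq_bigr => q _; rewrite !inE.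
case: (eqVneq q (enum_rank set0)) => [->|Hq] /=.
  by rewrite big1 // => p _; rewrite evK (negbTE (child_set0 _)).
have Hq' : ev q != set0.
  by apply: contra Hq => /eqP <-; rewrite /ev enum_valK.
have [P HP] := child_exists Hq'.
rewrite (bigD1 (enum_rank P)) //= evK HP big1 // => p Hp.
case: (boolP (child (ev p) (ev q))) => // Hc.
have Ep : p = enum_rank P by apply: ev_inj; rewrite evK; exact: child_uniq Hc HP.
by move: Hp; rewrite Ep eqxx.
Qed.

Lemma d_full : d (set0 : T) setT = k.
Proof.
rewrite /d (eq_bigr (fun _ => 1)) ?sum1_card ?card_ord // => i _.
rewrite /term inE in_setT.
have -> : dif (set0 : T) setT i by apply/difP; exists i; rewrite ?inE.
by [].
Qed.

Lemma diam_lb : k <= diameter Sg.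
Proof.
rewrite /diameter; apply: leq_trans (leq_bigmax (enum_rank set0)).
apply: leq_trans (leq_bigmax (enum_rank setT)).
by rewrite dist_tree !evK d_full.
Qed.

Lemma diam_ub : diameter Sg <= k.*2.
Proof.
rewrite /diameter; apply/bigmax_leqP => u _; apply/bigmax_leqP => v _.
by rewrite dist_tree d_le.
Qed.

End Game.

From Stdlib Require Import Reals.
From Stdlib Require Import Lra.


Lemma log2_pow k : log2 (INR (expn 2 k)) = INR k.
Proof.
rewrite /log2 -powE pow_INR (_ : INR 2 = 2%R); last by simpl; lra.
rewrite ln_pow; last lra.
have H : (0 < ln 2)%R by move: ln_lt_2; lra.
field; lra.
Qed.

Theorem mainTheorem5 :
  exists c1 c2 : R, (0 < c1)%R /\ (0 < c2)%R /\
    forall N : nat, exists n : nat, (N <= n)%N /\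
      exists b : 'I_n -> nat,
        (forall i, (b i <= n.-1)%N) /\
        (\sum_(i < n) b i)%N = n.-1 /\
        exists S : 'I_n -> {set 'I_n},
          sum_equilibrium b S /\
          (c1 * log2 (INR n) <= INR (diameter S))%R /\
          (INR (diameter S) <= c2 * log2 (INR n))%R.
Proof.
exists 1%R, 2%R; split; first lra; split; first lra.
move=> N; exists #|{set 'I_(N.+3)}|; split.
  rewrite card_T; apply: leq_trans (leq_addr 3 N) _; rewrite addn3; apply: ltnW.
  exact: ltn_expl.
exists (@bg N.+3); split; first exact: bg_le.
split; first exact: sum_bg.
exists (@Sg N.+3); split; first by apply: equil.
have Hk : (3 <= N.+3)%N by [].
have -> : log2 (INR #|{set 'I_N.+3}|) = INR N.+3 by rewrite card_T log2_pow.
split.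
  rewrite Rmult_1_l; apply: le_INR; apply/leP; exact: diam_lb.
apply: (Rle_trans _ (INR (N.+3).*2)); first by apply: le_INR; apply/leP; apply: diam_ub.
by rewrite -mul2n mult_INR; simpl; lra.
Qed.
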